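(* Let $\mathcal{C}\subseteq\{\pm1\}^n$ be an $\epsilon$-balanced linear code, let $L\subseteq[n]$ with $|L|=\ell>0$, let $a\in\{\pm1\}^L$, and let $\mathcal{R}=\{c\in\mathcal{C}: c_j=a_j\text{ for all }j\in L\}$. If $\ell/n>2\epsilon$, then $$|\mathcal{R}|\le\frac{1-2\epsilon}{\ell/n-2\epsilon}.$$
   Context: The binary field $\mathbb{F}_2$ is represented by $\{\pm1\}$; a linear code is an $\mathbb{F}_2$-subspace of $\{\pm1\}^n$. A code is $\epsilon$-balanced if $(1/2-\epsilon)n\le d_H(c,c')\le(1/2+\epsilon)n$ for all distinct codewords $c,c'$, where $d_H$ is Hamming distance. $\mathcal{R}$ is the set of codewords of $\mathcal{C}$ whose entries at the positions in $L$ are fixed to the prescribed values $a$. *)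

(* Defs.v *)
From HB Require Import structures.
From mathcomp Require Import all_boot all_order all_algebra.
Set Implicit Arguments. Unset Strict Implicit. Unset Printing Implicit Defensive.
Import Order.TTheory GRing.Theory Num.Theory.
Local Open Scope ring_scope.

(* Words of length n over F_2 (the paper writes F_2 multiplicatively as {+-1};
   Hamming distance, linearity and restrictions are representation-independent). *)
Notation word n := 'rV['F_2]_n.

Definition dH n (c c' : word n) : nat := #|[set i : 'I_n | c 0 i != c' 0 i]|.

Definition eps_balanced (R : realFieldType) n (eps : R) (C : {vspace word n}) : Prop :=
  forall c c' : word n, c \in C -> c' \in C -> c != c' ->
    (1/2 - eps) * n%:R <= (dH c c')%:R /\ (dH c c')%:R <= (1/2 + eps) * n%:R.

Definition restr n (C : {vspace word n}) (L : {set 'I_n}) (a : word n) : {set word n} :=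
  [set c : word n | (c \in C) && [forall j in L, c 0 j == a 0 j]].

(* Main.v *)
Require Import Defs.
From HB Require Import structures.
From mathcomp Require Import all_boot all_order all_algebra.
From mathcomp Require Import lra ring.
Import Order.TTheory GRing.Theory Num.Theory.
Local Open Scope ring_scope.

Definition sgn (R : realFieldType) (b : 'F_2) : R := if b == 0 then 1 else -1.

Lemma neq_sgn (R : realFieldType) (b b' : 'F_2) :
  ((b != b')%:R : R) = (1 - sgn R b * sgn R b') / 2.
Proof.
case: b => [[|[|//]]] ?; case: b' => [[|[|//]]] ? /=; rewrite /sgn /=; lra.
Qed.

Lemma dH_sum (R : realFieldType) n (c c' : word n) :
  ((dH c c')%:R : R) = \sum_(i < n) ((c 0 i != c' 0 i)%:R).
Proof.
rewrite /dH -sum1_card natr_sum big_mkcond /=; apply: eq_bigr => i _.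
by rewrite inE; case: (c 0 i != c' 0 i).
Qed.

Lemma pair_sum (R : realFieldType) (T : finType) (S : {set T}) (x : T -> R) :
  \sum_(c in S) \sum_(c' in S) (1 - x c * x c') / 2
  = (#|S|%:R ^+ 2 - (\sum_(c in S) x c) ^+ 2) / 2.
Proof.
have -> : (\sum_(c in S) x c) ^+ 2 = \sum_(c in S) \sum_(c' in S) x c * x c'.
  by rewrite expr2 mulr_suml; apply: eq_bigr => c _; rewrite mulr_sumr.
have -> : (#|S|%:R : R) ^+ 2 = \sum_(c in S) \sum_(c' in S) 1.
  by rewrite !sumr_const expr2 mulr_natr.
rewrite -sumrB mulr_suml; apply: eq_bigr => c _; rewrite -sumrB mulr_suml.
by [].
Qed.

Theorem lemma4 (R : realFieldType) (n : nat) (eps : R)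
    (C : {vspace 'rV['F_2]_n}) (L : {set 'I_n}) (a : 'rV['F_2]_n) :
  eps_balanced eps C ->
  (0 < #|L|)%N ->
  2 * eps < #|L|%:R / n%:R ->
  (#|restr C L a|%:R : R) <= (1 - 2 * eps) / (#|L|%:R / n%:R - 2 * eps).
Proof.
move=> bal Lpos hl.
set S := restr C L a.
set m := #|S|.
set l := #|L|.
have ln : (l <= n)%N by rewrite /l -[X in (_ <= X)%N]card_ord max_card.
have npos : (0 < n)%N by apply: leq_trans Lpos ln.
have nR : (0 : R) < n%:R by rewrite ltr0n.
have lnR : (l%:R : R) <= n%:R by rewrite ler_nat.
have lnR' : (l%:R / n%:R : R) <= 1 by rewrite ler_pdivrMr // mul1r.
have dpos : 0 < l%:R / n%:R - 2 * eps by rewrite subr_gt0.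
set K := (1/2 - eps) * n%:R.
set T := \sum_(c in S) \sum_(c' in S) ((dH c c')%:R : R).
have Tlow : m%:R * (m%:R - 1) * K <= T.
  have -> : m%:R * (m%:R - 1) * K = \sum_(c in S) ((m%:R - 1) * K).
    by rewrite sumr_const -[_ *+ #|S|]mulr_natl mulrA.
  rewrite /T; apply: ler_sum => c cS.
  have -> : (m%:R - 1) * K = \sum_(c' in S) (if c' == c then 0 else K).
    rewrite [RHS](bigD1 c) //= eqxx add0r.
    have -> : \sum_(c' in S | c' != c) (if c' == c then 0 else K) = \sum_(c' in S | c' != c) K.
      by apply: eq_bigr => c' /andP [_ /negbTE ->].
    have E : \sum_(c' in S) K = K + \sum_(c' in S | c' != c) K := bigD1 c cS.
    rewrite sumr_const in E.
    have -> : \sum_(c' in S | c' != c) K = K *+ m - K by rewrite E addrC addKr.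
    rewrite -mulr_natl; ring.
  apply: ler_sum => c' c'S; case: eqP => [->|/eqP ne].
    by rewrite ler0n.
  have c'C : c' \in C by move: c'S; rewrite inE => /andP [].
  have cC : c \in C by move: cS; rewrite inE => /andP [].
  rewrite eq_sym in ne.
  by have [h _] := bal c c' cC c'C ne.
have Tup : T <= (n%:R - l%:R) * (m%:R ^+ 2 / 2).
  rewrite /T.
  under eq_bigr => c _ do under eq_bigr => c' _ do rewrite dH_sum.
  under eq_bigr => c _ do rewrite exchange_big.
  rewrite exchange_big /= (bigID (fun i => i \in L)) /=.
  rewrite big1 ?add0r; last first.
    move=> i iL; apply: big1 => c cS; apply: big1 => c' c'S.
    move: cS c'S; rewrite !inE => /andP [_ /forallP h] /andP [_ /forallP h'].
    by rewrite (eqP (implyP (h i) iL)) (eqP (implyP (h' i) iL)) eqxx.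
  have E : \sum_(i < n) (m%:R ^+ 2 / 2 : R) = \sum_(i < n | i \in L) (m%:R ^+ 2 / 2)
     + \sum_(i < n | i \notin L) (m%:R ^+ 2 / 2) := bigID _ _ _.
  rewrite !sumr_const card_ord in E.
  have -> : (n%:R - l%:R) * (m%:R ^+ 2 / 2 : R) = \sum_(i < n | i \notin L) (m%:R ^+ 2 / 2).
    move: E; rewrite -/l sumr_const; set M := m%:R ^+ 2 / 2; move=> E.
    apply: (addrI (M *+ l)); rewrite -E -[M *+ l]mulr_natl -[M *+ n]mulr_natl; ring.
  apply: ler_sum => i _.
  under eq_bigr => c _ do under eq_bigr => c' _ do rewrite neq_sgn.
  rewrite pair_sum.
  have := sqr_ge0 (\sum_(c in S) sgn R (c 0 i)); lra.
have H := le_trans Tlow Tup.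
rewrite ler_pdivlMr //.
have [m0|mpos] := eqVneq m 0%N.
  rewrite m0 mul0r; lra.
have mR : (0 : R) < m%:R by rewrite ltr0n lt0n.
set q := l%:R / n%:R.
have lq : (l%:R : R) = q * n%:R by rewrite /q divfK // gt_eqF.
rewrite lq /K in H.
have H2 : (m%:R - 1) * (1/2 - eps) * n%:R <= ((1 - q) * m%:R / 2) * n%:R.
  have e1 : m%:R * ((m%:R - 1) * (1/2 - eps) * n%:R) = m%:R * (m%:R - 1) * ((1/2 - eps) * n%:R) :> R by ring.
  have e2 : (n%:R - q * n%:R) * (m%:R ^+ 2 / 2) = m%:R * ((1 - q) * m%:R / 2 * n%:R) :> R by ring.
  by rewrite -(ler_pM2l mR) e1 -e2.
rewrite ler_pM2r // in H2.
nra.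
Qed.
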